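(* Let $\alpha$ be a graph function on a strongly connected digraph $G$, and let $r,s$ be raising vectors obtained from $\alpha$ via two (possibly different) finite sequences of raising operations. Suppose $r\le s$ coordinatewise, and let $r',s'$ be the raising vectors obtained from $r,s$ respectively after one additional raising operation at a common vertex $v$. Then $r'\le s'$.
   Context: $G$ is a strongly connected directed graph (self-loops allowed); a graph function assigns a real weight $\alpha_{uv}$ to each edge. For a graph function $\beta$, $\beta_v^{\text{in}}=\max_{u:(u,v)\in G}\beta_{uv}$, $\beta_v^{\text{out}}=\max_{w:(v,w)\in G}\beta_{vw}$, $\rho^R_v=\max\{0,\beta_v^{\text{out}}-\beta_v^{\text{in}}\}$. A raising operation at $v$: if $\rho^R_v>0$, add $\rho^R_v/2$ to each $\beta_{uv}$ ($u\ne v$) and subtract it from each $\beta_{vw}$ ($w\ne v$); otherwise do nothing. The raising vector of a sequence of raising operations starting at $\alpha$ starts at $0$ and, at each operation at vertex $v$, increases its $v$-coordinate by the current $\rho^R_v/2$; the current graph function is then $\beta_{uv}=\alpha_{uv}+r_v-r_u$ where $r$ is the current raising vector. *)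

(* Defs.v *)
From mathcomp Require Import all_boot all_order all_algebra.
Set Implicit Arguments. Unset Strict Implicit. Unset Printing Implicit Defensive.
Import Order.TTheory GRing.Theory Num.Theory.
Local Open Scope ring_scope.

Definition strongly_connected (V : finType) (G : rel V) : Prop :=
  forall x y : V, connect G x y.

(* maximum of f over the (finite) set P; 0 if P is empty (never used for
   the nonempty in/out neighbourhoods of a strongly connected graph with
   at least two vertices). *)
Definition bmax (V : finType) (R : realFieldType) (P : pred V) (f : V -> R) : R :=
  match [pick u | P u] with
  | Some u0 => \big[Num.max/f u0]_(u | P u) f u
  | None => 0
  end.

Definition cur (V : finType) (R : realFieldType) (alpha : V -> V -> R)
  (r : V -> R) (u w : V) : R := alpha u w + r w - r u.

Definition beta_in (V : finType) (R : realFieldType) (G : rel V)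
  (alpha : V -> V -> R) (r : V -> R) (v : V) : R :=
  bmax (fun u => G u v) (fun u => cur alpha r u v).

Definition beta_out (V : finType) (R : realFieldType) (G : rel V)
  (alpha : V -> V -> R) (r : V -> R) (v : V) : R :=
  bmax (fun w => G v w) (fun w => cur alpha r v w).

Definition rhoR (V : finType) (R : realFieldType) (G : rel V)
  (alpha : V -> V -> R) (r : V -> R) (v : V) : R :=
  Num.max 0 (beta_out G alpha r v - beta_in G alpha r v).

Definition raise (V : finType) (R : realFieldType) (G : rel V)
  (alpha : V -> V -> R) (v : V) (r : V -> R) : V -> R :=
  fun x => if x == v then r x + rhoR G alpha r v / 2 else r x.

Definition raising_vector (V : finType) (R : realFieldType) (G : rel V)
  (alpha : V -> V -> R) (s : seq V) : V -> R :=
  foldl (fun r v => raise G alpha v r) (fun _ => 0) s.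

(* Main.v *)
Require Import Defs.
From mathcomp Require Import all_boot all_order all_algebra.
From mathcomp Require Import lra.
Import Order.TTheory GRing.Theory Num.Theory.
Local Open Scope ring_scope.

Lemma bmax_shift (V : finType) (R : realFieldType) (P : pred V) (f g : V -> R) (a b : R) :
  (forall u, P u -> f u + a <= g u + b) -> a <= b ->
  bmax P f + a <= bmax P g + b.
Proof.
move=> H Hab; rewrite /bmax; case: pickP => [u0 Pu0|_]; last by rewrite !add0r.
apply: (big_ind2 (fun x y => x + a <= y + b)) => [|x1 x2 y1 y2 H1 H2|u Pu].
- by apply: H.
- case: (leP x1 y1) => h1; case: (leP x2 y2) => h2; lra.
- by apply: H.
Qed.

Theorem lemma2 (V : finType) (R : realFieldType) (G : rel V)
  (alpha : V -> V -> R) (hG : strongly_connected G)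
  (s1 s2 : seq V) (v : V) :
  (forall x, raising_vector G alpha s1 x <= raising_vector G alpha s2 x) ->
  forall x, raise G alpha v (raising_vector G alpha s1) x
            <= raise G alpha v (raising_vector G alpha s2) x.
Proof.
set r := raising_vector G alpha s1; set s := raising_vector G alpha s2.
move=> Hrs x; rewrite /raise; case: eqP => [->|_]; last exact: Hrs.
have Ho : beta_out G alpha r v + r v <= beta_out G alpha s v + s v.
  apply: bmax_shift => // w _; rewrite /cur; have := Hrs w; have := Hrs v; lra.
have Hi : beta_in G alpha s v + - s v <= beta_in G alpha r v + - r v.
  apply: bmax_shift; last by have := Hrs v; lra.
  move=> u _; rewrite /cur; have := Hrs u; have := Hrs v; lra.
have Hv := Hrs v; rewrite /rhoR.
set Or := beta_out G alpha r v in Ho *; set Os := beta_out G alpha s v in Ho *.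
set Ir := beta_in G alpha r v in Hi *; set Is := beta_in G alpha s v in Hi *.
case: (leP 0 (Or - Ir)) => h1; case: (leP 0 (Os - Is)) => h2; lra.
Qed.
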